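(* Let $\bm{G}_t\in\mathbb{R}^{n_1\times n_2}$ and $\epsilon_t>0$, and let $\bm{L}_t=\epsilon_t\bm{I}_{n_1}+\mathrm{diag}(\bm{G}_t\bm{G}_t^T)$, $\bm{R}_t=\epsilon_t\bm{I}_{n_2}+\mathrm{diag}(\bm{G}_t^T\bm{G}_t)$. Then for every $\bm{Z}\in\mathbb{R}^{n_1\times n_2}$, $$\nu_t\|\bm{Z}\|_F^2\le\|\bm{Z}\|_{\mathcal{W}_t}^2\le\mu_t\|\bm{Z}\|_F^2,$$ where $\nu_t=\epsilon_t^{1/2}$ and $\mu_t=(\epsilon_t+\|\bm{G}_t\|_\vee^2)^{1/2}$.
   Context: $\mathrm{diag}(\bm{M})$ is the diagonal matrix with the diagonal entries of $\bm{M}$. $\|\bm{Z}\|_{\mathcal{W}_t}^2=\langle\bm{L}_t^{1/4}\bm{Z}\bm{R}_t^{1/4},\bm{Z}\rangle$ with $\langle\bm{A},\bm{B}\rangle=\mathrm{trace}(\bm{A}^T\bm{B})$. $\|\bm{Z}\|_\vee=\max\{\max_i\|\bm{Z}(i,:)\|_2,\max_j\|\bm{Z}(:,j)\|_2\}$ (largest Euclidean norm of a row or column). In the paper $\bm{G}_t=\mathcal{A}^*(\mathcal{A}\bm{X}_t-\bm{y})$ is the gradient at the current iterate. *)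

(* Defs.v *)
From HB Require Import structures.
From mathcomp Require Import all_boot all_order all_algebra.
Set Implicit Arguments. Unset Strict Implicit. Unset Printing Implicit Defensive.
Import Order.TTheory GRing.Theory Num.Theory.
Local Open Scope ring_scope.

Definition diagm {R : ringType} {n : nat} (M : 'M[R]_n) : 'M[R]_n :=
  \matrix_(i, j) (if i == j then M i i else 0).

Definition root4 {R : rcfType} (x : R) : R := Num.sqrt (Num.sqrt x).

(* Principal fourth root of a diagonal positive semidefinite matrix
   (applied only to the diagonal matrices L_t, R_t): entrywise root on the
   diagonal. *)
Definition diag_root4 {R : rcfType} {n : nat} (D : 'M[R]_n) : 'M[R]_n :=
  \matrix_(i, j) (if i == j then root4 (D i i) else 0).

Definition frob_inner {R : ringType} {m n : nat} (A B : 'M[R]_(m, n)) : R :=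
  \tr (A^T *m B).

Definition frob_norm2 {R : ringType} {m n : nat} (Z : 'M[R]_(m, n)) : R :=
  \sum_(i < m) \sum_(j < n) Z i j ^+ 2.

Definition vee_norm {R : rcfType} {m n : nat} (Z : 'M[R]_(m, n)) : R :=
  Num.max (\big[Num.max/0]_(i < m) Num.sqrt (\sum_(j < n) Z i j ^+ 2))
          (\big[Num.max/0]_(j < n) Num.sqrt (\sum_(i < m) Z i j ^+ 2)).

Definition Lmat {R : ringType} {n1 n2 : nat} (eps : R) (G : 'M[R]_(n1, n2)) : 'M[R]_n1 :=
  eps%:M + diagm (G *m G^T).
Definition Rmat {R : ringType} {n1 n2 : nat} (eps : R) (G : 'M[R]_(n1, n2)) : 'M[R]_n2 :=
  eps%:M + diagm (G^T *m G).

Definition W_norm2 {R : rcfType} {n1 n2 : nat} (eps : R) (G Z : 'M[R]_(n1, n2)) : R :=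
  frob_inner (diag_root4 (Lmat eps G) *m Z *m diag_root4 (Rmat eps G)) Z.

(* Main.v *)
Require Import Defs.
From HB Require Import structures.
From mathcomp Require Import all_boot all_order all_algebra.
From mathcomp Require Import ring.
Import Order.TTheory GRing.Theory Num.Theory.
Local Open Scope ring_scope.

Lemma root4_ge0 (R : rcfType) (x : R) : 0 <= root4 x.
Proof. exact: sqrtr_ge0. Qed.

Lemma root4_le (R : rcfType) (x y : R) : 0 <= y -> x <= y -> root4 x <= root4 y.
Proof.
move=> y0 xy; rewrite /root4 ler_sqrt ?sqrtr_ge0 //.
by rewrite ler_sqrt.
Qed.

Lemma root4_sq (R : rcfType) (x : R) : 0 <= x -> root4 x * root4 x = Num.sqrt x.
Proof. by move=> x0; rewrite /root4 -expr2 sqr_sqrtr // sqrtr_ge0. Qed.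

Lemma bigmax_ub (R : rcfType) (I : eqType) (s : seq I) (F : I -> R) (x : I) :
  x \in s -> F x <= \big[Num.max/0]_(j <- s) F j.
Proof.
elim: s => [//|a s IH]; rewrite inE big_cons le_max => /orP [/eqP->|/IH->].
  by rewrite lexx.
by rewrite orbT.
Qed.

Lemma bigmax_ge0 (R : rcfType) (I : Type) (s : seq I) (F : I -> R) :
  0 <= \big[Num.max/0]_(j <- s) F j.
Proof.
elim: s => [|a s IH]; first by rewrite big_nil.
by rewrite big_cons le_max IH orbT.
Qed.

Lemma vee_ge0 (R : rcfType) m n (G : 'M[R]_(m, n)) : 0 <= vee_norm G.
Proof. by rewrite /vee_norm le_max bigmax_ge0. Qed.

Lemma sq_le_vee (R : rcfType) m n (G : 'M[R]_(m, n)) (s : R) :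
  0 <= s -> Num.sqrt s <= vee_norm G -> s <= vee_norm G ^+ 2.
Proof.
move=> s0 h; rewrite -(sqr_sqrtr s0) !expr2.
by apply: ler_pM; rewrite ?sqrtr_ge0.
Qed.

Lemma row_le (R : rcfType) m n (G : 'M[R]_(m, n)) i :
  \sum_(j < n) G i j ^+ 2 <= vee_norm G ^+ 2.
Proof.
apply: sq_le_vee; first by apply: sumr_ge0 => j _; exact: sqr_ge0.
rewrite /vee_norm le_max; apply/orP; left.
exact: (@bigmax_ub _ _ _ (fun i => Num.sqrt (\sum_(j < n) G i j ^+ 2)) _ (mem_index_enum i)).
Qed.

Lemma col_le (R : rcfType) m n (G : 'M[R]_(m, n)) j :
  \sum_(i < m) G i j ^+ 2 <= vee_norm G ^+ 2.
Proof.
apply: sq_le_vee; first by apply: sumr_ge0 => i _; exact: sqr_ge0.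
rewrite /vee_norm le_max; apply/orP; right.
exact: (@bigmax_ub _ _ _ (fun j => Num.sqrt (\sum_(i < m) G i j ^+ 2)) _ (mem_index_enum j)).
Qed.

Lemma Lmat_ii (R : rcfType) n1 n2 (eps : R) (G : 'M[R]_(n1, n2)) i :
  Lmat eps G i i = eps + \sum_(k < n2) G i k ^+ 2.
Proof.
rewrite /Lmat /diagm !mxE eqxx mulr1n; congr (_ + _).
by apply: eq_bigr => k _; rewrite mxE expr2.
Qed.

Lemma Rmat_ii (R : rcfType) n1 n2 (eps : R) (G : 'M[R]_(n1, n2)) j :
  Rmat eps G j j = eps + \sum_(k < n1) G k j ^+ 2.
Proof.
rewrite /Rmat /diagm !mxE eqxx mulr1n; congr (_ + _).
by apply: eq_bigr => k _; rewrite mxE expr2.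
Qed.

Lemma W_expand (R : rcfType) n1 n2 (eps : R) (G Z : 'M[R]_(n1, n2)) :
  W_norm2 eps G Z = \sum_(i < n1) \sum_(j < n2)
     (root4 (Lmat eps G i i) * root4 (Rmat eps G j j)) * Z i j ^+ 2.
Proof.
rewrite /W_norm2 /frob_inner /mxtrace exchange_big /=.
apply: eq_bigr => j _; rewrite mxE; apply: eq_bigr => i _.
rewrite mxE [X in X * _]mxE (bigD1 j) //= big1 => [|k /negbTE kj]; last first.
  by rewrite [diag_root4 _ k j]mxE kj mulr0.
rewrite addr0 [diag_root4 _ j j]mxE eqxx mxE (bigD1 i) //= big1 => [|k /negbTE ki]; last first.
  by rewrite [diag_root4 _ i k]mxE eq_sym ki mul0r.
rewrite addr0 [diag_root4 _ i i]mxE eqxx expr2; ring.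
Qed.


Theorem lemma3p3 (R : rcfType) (n1 n2 : nat) (G : 'M[R]_(n1, n2)) (eps : R)
  (heps : 0 < eps) (Z : 'M[R]_(n1, n2)) :
  Num.sqrt eps * frob_norm2 Z <= W_norm2 eps G Z /\
  W_norm2 eps G Z <= Num.sqrt (eps + vee_norm G ^+ 2) * frob_norm2 Z.
Proof.
have e0 : 0 <= eps := ltW heps.
have M0 : 0 <= eps + vee_norm G ^+ 2 by rewrite addr_ge0 // sqr_ge0.
rewrite W_expand /frob_norm2 !mulr_sumr; split; apply: ler_sum => i _;
  rewrite mulr_sumr; apply: ler_sum => j _; apply: ler_wpM2r; rewrite ?sqr_ge0 //.
- rewrite -root4_sq //; apply: ler_pM; rewrite ?root4_ge0 //; apply: root4_le.
  + by rewrite Lmat_ii addr_ge0 // sumr_ge0 // => k _; rewrite sqr_ge0.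
  + by rewrite Lmat_ii lerDl sumr_ge0 // => k _; rewrite sqr_ge0.
  + by rewrite Rmat_ii addr_ge0 // sumr_ge0 // => k _; rewrite sqr_ge0.
  + by rewrite Rmat_ii lerDl sumr_ge0 // => k _; rewrite sqr_ge0.
- rewrite -root4_sq //; apply: ler_pM; rewrite ?root4_ge0 //; apply: root4_le => //.
  + by rewrite Lmat_ii lerD2l row_le.
  + by rewrite Rmat_ii lerD2l col_le.
Qed.
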